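(* Let $X$ be a finite connected poset and $\theta\in\mathcal{M}(X)$. Then $C\sim D$ implies $\theta(C)\sim\theta(D)$, so $\theta$ induces a map $\widetilde\theta$ on $\mathcal{C}(X)/{\sim}$ sending the class of $C$ to the class of $\theta(C)$, and $\widetilde\theta$ is a bijection. Moreover, if $\theta$ is increasing (resp. decreasing) on $C\in\mathcal{C}(X)$, then it is increasing (resp. decreasing) on every $D\in\mathcal{C}(X)$ with $D\sim C$.
   Context: $\mathcal{C}(X)$ is the set of maximal chains; $\mathrm{Min}(X)$, $\mathrm{Max}(X)$ the minimal and maximal elements. Two maximal chains are linked if they share an element lying in neither $\mathrm{Min}(X)$ nor $\mathrm{Max}(X)$; $\sim$ is the equivalence relation on $\mathcal{C}(X)$ generated by linkedness. For $x<y$, $e_{xy}$ denotes the incidence-algebra basis element and $B=\{e_{xy}:x<y\}$. For a bijection $\theta:B\to B$ and $C:u_1<\dots<u_m$ in $\mathcal{C}(X)$, $\theta$ is increasing on $C$ if there is $D:v_1<\dots<v_m$ in $\mathcal{C}(X)$ with $\theta(e_{u_iu_j})=e_{v_iv_j}$ for all $i<j$, decreasing if $\theta(e_{u_iu_j})=e_{v_{m-j+1}v_{m-i+1}}$ for all $i<j$; in either case write $\theta(C)=D$. $\mathcal{M}(X)$ is the set of bijections $B\to B$ increasing or decreasing on every maximal chain. *)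

(* Defs.v *)
From HB Require Import structures.
From mathcomp Require Import all_boot all_order all_fingroup.
From Stdlib Require Import Relations.Relation_Operators.
Set Implicit Arguments. Unset Strict Implicit. Unset Printing Implicit Defensive.
Import Order.Theory.
Local Open Scope order_scope.

Section Defs.
Context {d : Order.disp_t} {T : finPOrderType d}.

Definition poset_connected : Prop :=
  forall x y : T, clos_refl_sym_trans T (fun a b => a <= b) x y.

(* The basis B = { e_xy : x < y } of the (strict part of the) incidence algebra;
   e_xy is represented by the pair (x, y). *)
Definition Bpair := {p : T * T | p.1 < p.2}.

Definition is_chain (s : seq T) : Prop := sorted <%O s.

Definition maxchain (s : seq T) : Prop :=
  is_chain s /\ forall t, is_chain t -> {subset s <= t} -> {subset t <= s}.

Definition is_min (x : T) : Prop := forall y : T, ~ (y < x).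
Definition is_max (x : T) : Prop := forall y : T, ~ (x < y).

Definition linked (C D : seq T) : Prop :=
  maxchain C /\ maxchain D /\
  exists x, [/\ x \in C, x \in D, ~ is_min x & ~ is_max x].

Definition chain_equiv : seq T -> seq T -> Prop := clos_refl_sym_trans _ linked.

Definition incr_on (th : {perm Bpair}) (C D : seq T) : Prop :=
  maxchain D /\ size D = size C /\
  forall (i j : nat), (i < j < size C)%N ->
  forall b : Bpair, val b = (nth (val b).1 C i, nth (val b).1 C j) ->
    val (th b) = (nth (val b).1 D i, nth (val b).1 D j).

Definition decr_on (th : {perm Bpair}) (C D : seq T) : Prop :=
  maxchain D /\ size D = size C /\
  forall (i j : nat), (i < j < size C)%N ->
  forall b : Bpair, val b = (nth (val b).1 C i, nth (val b).1 C j) ->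
    val (th b) = (nth (val b).1 D (size C - 1 - j), nth (val b).1 D (size C - 1 - i)).

(* theta(C) = D *)
Definition maps_chain (th : {perm Bpair}) (C D : seq T) : Prop :=
  incr_on th C D \/ decr_on th C D.

Definition in_M (th : {perm Bpair}) : Prop :=
  forall C, maxchain C -> exists D, maps_chain th C D.

End Defs.

(* Main.v *)
Require Import Defs.
From mathcomp Require Import all_boot all_order all_fingroup zify.
From Stdlib Require Import Relations.Relation_Operators Relations.Operators_Properties Classical IndefiniteDescription.
Set Implicit Arguments. Unset Strict Implicit. Unset Printing Implicit Defensive.
Import Order.Theory.
Local Open Scope order_scope.


Section Basic.
Context {d : Order.disp_t} {T : finPOrderType d}.

Lemma nth_lt (s : seq T) x0 i j : is_chain s -> (i < j)%N -> (j < size s)%N ->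
  nth x0 s i < nth x0 s j.
Proof.
move=> hs hij hj; apply: (sorted_ltn_nth lt_trans) => //; rewrite inE //.
exact: ltn_trans hj.
Qed.

Lemma chain_uniq (s : seq T) : is_chain s -> uniq s.
Proof. by apply: sorted_uniq; [exact: lt_trans | exact: ltxx]. Qed.

Lemma chain_comp (s : seq T) a b : is_chain s -> a \in s -> b \in s ->
  (a <= b) || (b <= a).
Proof.
move=> hs ha hb.
rewrite -(nth_index a ha) -(nth_index a hb).
case: (ltngtP (index a s) (index b s)) => h.
- by rewrite ltW // nth_lt // index_mem.
- by rewrite orbC ltW // nth_lt // index_mem.
- by rewrite h lexx.
Qed.

Lemma head_le (s : seq T) x0 c : is_chain s -> c \in s -> nth x0 s 0 <= c.
Proof.
move=> hs hc; rewrite -(nth_index x0 hc).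
case: (posnP (index c s)) => [->|h]; first exact: lexx.
by apply: ltW; apply: nth_lt => //; rewrite index_mem.
Qed.

Lemma last_ge (s : seq T) x0 c : is_chain s -> c \in s -> c <= nth x0 s (size s).-1.
Proof.
move=> hs hc; rewrite -(nth_index x0 hc).
have hi : (index c s < size s)%N by rewrite index_mem.
case: (ltngtP (index c s) (size s).-1) => h.
- by apply: ltW; apply: nth_lt => //; lia.
- lia.
- by rewrite h lexx.
Qed.

Lemma Lcomp (C : seq T) y : maxchain C ->
  (forall c, c \in C -> (y <= c) || (c <= y)) -> y \in C.
Proof.
move=> [hC hmax] hy.
case hyC: (y \in C) => //.
pose t := sort <=%O (y :: C).
have ht : is_chain t.
  rewrite /is_chain lt_sorted_uniq_le sort_uniq /= hyC chain_uniq //=.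
  apply: (@sort_sorted_in _ (mem (y :: C))); last by apply/allP.
  move=> a b; rewrite !inE => /orP[/eqP->|ha] /orP[/eqP->|hb].
  - by rewrite lexx.
  - by rewrite hy.
  - by rewrite orbC hy.
  - exact: chain_comp hC ha hb.
have sub : {subset C <= t} by move=> c hc; rewrite mem_sort inE hc orbT.
by have := hmax t ht sub y; rewrite mem_sort inE eqxx hyC; apply.
Qed.

Lemma first_min (C : seq T) x0 : maxchain C -> (0 < size C)%N -> is_min (nth x0 C 0).
Proof.
move=> hC hs y hy.
have yC : y \in C.
  apply: Lcomp => // c hc; apply/orP; left.
  exact: ltW (lt_le_trans hy (head_le x0 hC.1 hc)).
by have := lt_le_trans hy (head_le x0 hC.1 yC); rewrite ltxx.
Qed.

Lemma last_max (C : seq T) x0 : maxchain C -> (0 < size C)%N -> is_max (nth x0 C (size C).-1).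
Proof.
move=> hC hs y hy.
have yC : y \in C.
  apply: Lcomp => // c hc; apply/orP; right.
  exact: ltW (le_lt_trans (last_ge x0 hC.1 hc) hy).
by have := lt_le_trans hy (last_ge x0 hC.1 yC); rewrite ltxx.
Qed.

Lemma interior (C : seq T) x0 j : is_chain C -> (0 < j)%N -> (j < (size C).-1)%N ->
  [/\ nth x0 C j \in C, ~ is_min (nth x0 C j) & ~ is_max (nth x0 C j)].
Proof.
move=> hC h0 h1.
have hj : (j < size C)%N by move: h1; case: (size C) => //= n h; apply: ltn_trans h _.
have hl : ((size C).-1 < size C)%N by move: h1; case: (size C).
split.
- exact: mem_nth.
- by move=> hm; apply: (hm (nth x0 C 0)); apply: nth_lt.
- by move=> hm; apply: (hm (nth x0 C (size C).-1)); apply: nth_lt.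
Qed.

End Basic.


Section P2.
Context {d : Order.disp_t} {T : finPOrderType d}.

Lemma split_lt (c1 c2 : seq T) x : is_chain (c1 ++ x :: c2) ->
  [/\ (forall a, a \in c1 -> a < x), (forall b, b \in c2 -> x < b),
      pairwise <%O c1 & pairwise <%O (x :: c2)].
Proof.
rewrite /is_chain (sorted_pairwise lt_trans) pairwise_cat => /and3P[h1 h2 h3].
split => //.
- by move=> a ha; move/allrelP: h1; apply => //; rewrite inE eqxx.
- by move=> b hb; move: h3; rewrite pairwise_cons => /andP[/allP + _]; apply.
Qed.

Lemma glue (c1 c2 d1 d2 : seq T) x : maxchain (c1 ++ x :: c2) -> maxchain (d1 ++ x :: d2) ->
  maxchain (c1 ++ x :: d2).
Proof.
move=> hC hD.
have [a1 b1 p1 q1] := split_lt hC.1.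
have [a2 b2 p2 q2] := split_lt hD.1.
have hE : is_chain (c1 ++ x :: d2).
  rewrite /is_chain (sorted_pairwise lt_trans) pairwise_cat p1 q2 !andbT.
  apply/allrelP => a b ha; rewrite inE => /orP[/eqP->|hb]; first exact: a1.
  exact: lt_trans (a1 _ ha) (b2 _ hb).
split => // t ht sub y yt.
have xt : x \in t by apply: sub; rewrite mem_cat inE eqxx orbT.
have cy : forall e, e \in c1 ++ x :: d2 -> (y <= e) || (e <= y).
  by move=> e he; apply: chain_comp ht yt (sub _ he).
case/orP: (chain_comp ht yt xt) => hyx.
- have : y \in c1 ++ x :: c2.
    apply: Lcomp => // c; rewrite mem_cat inE => /orP[hc|/orP[/eqP->|hc]].
    + by apply: cy; rewrite mem_cat hc.
    + by rewrite hyx.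
    + by rewrite ltW // (le_lt_trans hyx (b1 _ hc)).
  rewrite !mem_cat !inE => /orP[->//|/orP[->|hc]]; first by rewrite orbT.
  by have := le_lt_trans hyx (b1 _ hc); rewrite ltxx.
- have : y \in d1 ++ x :: d2.
    apply: Lcomp => // c; rewrite mem_cat inE => /orP[hc|/orP[/eqP->|hc]].
    + by rewrite orbC ltW // (lt_le_trans (a2 _ hc) hyx).
    + by rewrite hyx orbT.
    + by apply: cy; rewrite mem_cat inE hc !orbT.
  rewrite !mem_cat !inE => /orP[hc|/orP[->|->]]; try by rewrite !orbT.
  by have := lt_le_trans (a2 _ hc) hyx; rewrite ltxx.
Qed.

Section Th.
Variable th : {perm (@Bpair d T)}.

Lemma incr_at (C C' : seq T) x0 i j (b : Bpair) : incr_on th C C' ->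
  (i < j)%N -> (j < size C)%N -> val b = (nth x0 C i, nth x0 C j) ->
  val (th b) = (nth x0 C' i, nth x0 C' j).
Proof.
move=> [_ [hs hf]] hij hj hb.
have hi : (i < size C)%N by apply: ltn_trans hj.
have H := hf i j (introT andP (conj hij hj)) b.
rewrite (set_nth_default x0 _ hi) (set_nth_default x0 _ hj) in H.
have H2 := H hb.
have hi' : (i < size C')%N by rewrite hs.
have hj' : (j < size C')%N by rewrite hs.
by rewrite (set_nth_default x0 _ hi') (set_nth_default x0 _ hj') in H2.
Qed.

Lemma decr_at (C C' : seq T) x0 i j (b : Bpair) : decr_on th C C' ->
  (i < j)%N -> (j < size C)%N -> val b = (nth x0 C i, nth x0 C j) ->
  val (th b) = (nth x0 C' (size C - 1 - j), nth x0 C' (size C - 1 - i)).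
Proof.
move=> [_ [hs hf]] hij hj hb.
have hi : (i < size C)%N by apply: ltn_trans hj.
have H := hf i j (introT andP (conj hij hj)) b.
rewrite (set_nth_default x0 _ hi) (set_nth_default x0 _ hj) in H.
have H2 := H hb.
have hi' : (size C - 1 - i < size C')%N by rewrite hs; lia.
have hj' : (size C - 1 - j < size C')%N by rewrite hs; lia.
by rewrite (set_nth_default x0 _ hi') (set_nth_default x0 _ hj') in H2.
Qed.


Definition mkB (a b : T) (h : a < b) : @Bpair d T := exist _ (a, b) h.

Lemma inv_incr (C C' : seq T) : maxchain C -> incr_on th C C' -> incr_on (th^-1)%g C' C.
Proof.
move=> hC hI; have [hC' [hs _]] := hI.
split => //; split => // i j /andP[hij hj] b.
suff aux : forall x0, val b = (nth x0 C' i, nth x0 C' j) ->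
   val ((th^-1)%g b) = (nth x0 C i, nth x0 C j) by apply: aux.
move=> x0 hb.
have hj0 : (j < size C)%N by rewrite -hs.
pose b0 := mkB (nth_lt x0 hC.1 hij hj0).
have e : th b0 = b.
  by apply: val_inj; rewrite (incr_at (x0:=x0) (b:=b0) hI hij hj0 (erefl _)) hb.
by rewrite -e permK.
Qed.

Lemma inv_decr (C C' : seq T) : maxchain C -> decr_on th C C' -> decr_on (th^-1)%g C' C.
Proof.
move=> hC hI; have [hC' [hs _]] := hI.
split => //; split => // i j /andP[hij hj] b.
suff aux : forall x0, val b = (nth x0 C' i, nth x0 C' j) ->
   val ((th^-1)%g b) = (nth x0 C (size C' - 1 - j), nth x0 C (size C' - 1 - i)) by apply: aux.
move=> x0 hb.
have h1 : (size C - 1 - j < size C - 1 - i)%N by lia.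
have h2 : (size C - 1 - i < size C)%N by lia.
pose b0 := mkB (nth_lt x0 hC.1 h1 h2).
have e : th b0 = b.
  apply: val_inj; rewrite (decr_at (x0:=x0) (b:=b0) hI h1 h2 (erefl _)) hb.
  have -> : (size C - 1 - (size C - 1 - i) = i)%N by lia.
  by have -> : (size C - 1 - (size C - 1 - j) = j)%N by lia.
by rewrite -e permK /= -hs.
Qed.

End Th.
End P2.


Section P3.
Context {d : Order.disp_t} {T : finPOrderType d}.

Lemma eq_pairs (C1 C2 : seq T) x0 m : size C1 = m -> size C2 = m -> (1 < m)%N ->
  (forall i j, (i < j)%N -> (j < m)%N ->
     (nth x0 C1 i, nth x0 C1 j) = (nth x0 C2 i, nth x0 C2 j)) -> C1 = C2.
Proof.
move=> h1 h2 hm H; apply: (eq_from_nth (x0:=x0)); first by rewrite h1 h2.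
move=> k; rewrite h1 => hk.
case: (posnP k) => [->|hk0].
- by case: (H 0%N 1%N isT hm).
- by case: (H 0%N k hk0 hk).
Qed.

Lemma iso_rst (a : T) x y : maxchain [:: a] ->
  clos_refl_sym_trans T (fun a b => a <= b) x y -> (x = a <-> y = a).
Proof.
move=> ha; elim => {x y}.
- move=> x y hxy; split=> [ex|ey].
  + subst x; apply/eqP; rewrite -mem_seq1; apply: Lcomp => // c; rewrite inE => /eqP->.
    by rewrite hxy orbT.
  + subst y; apply/eqP; rewrite -mem_seq1; apply: Lcomp => // c; rewrite inE => /eqP->.
    by rewrite hxy.
- by [].
- by move=> x y _ [h1 h2]; split.
- by move=> x y z _ [h1 h2] _ [h3 h4]; split => h; auto.
Qed.

Lemma mixed_eq (th : {perm (@Bpair d T)}) (C C1 C2 : seq T) : maxchain C ->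
  incr_on th C C1 -> decr_on th C C2 -> (1 < size C)%N -> C1 = C2.
Proof.
move=> hC hI hD hm.
have [hC1 [hs1 _]] := hI; have [hC2 [hs2 _]] := hD.
have x0 : T by case: (C) hm => [//|x ?] _; exact x.
have h01 := nth_lt x0 hC.1 (isT : (0<1)%N) hm.
pose b := mkB h01.
have e1 := incr_at (x0:=x0) (b:=b) hI (isT : (0 < 1)%N) hm (erefl _).
have e2 := decr_at (x0:=x0) (b:=b) hD (isT : (0 < 1)%N) hm (erefl _).
rewrite e1 in e2; case: e2 => f1 f2.
case: (ltngtP (size C) 2) => hsz; first by lia.
- exfalso.
  have := first_min (x0:=x0) hC1 ltac:(rewrite hs1; lia).
  rewrite f1.
  have [_ hnm _] := interior x0 (j:=(size C - 1 - 1)%N) hC2.1 ltac:(lia) ltac:(rewrite hs2; lia).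
  exact: hnm.
- apply: (eq_pairs (x0:=x0) (m:=2)); rewrite ?hs1 ?hs2 ?hsz // => i j hij hj.
  have -> : i = 0%N by lia.
  have -> : j = 1%N by lia.
  by rewrite f1 f2 hsz.
Qed.

Lemma uniq_img (th : {perm (@Bpair d T)}) (C C1 C2 : seq T) : poset_connected (T:=T) ->
  maxchain C -> maps_chain th C C1 -> maps_chain th C C2 -> C1 = C2.
Proof.
move=> hconn hC h1 h2.
have [hC1 hs1] : maxchain C1 /\ size C1 = size C by case: h1 => [[? [? _]]|[? [? _]]].
have [hC2 hs2] : maxchain C2 /\ size C2 = size C by case: h2 => [[? [? _]]|[? [? _]]].
case: (ltnP 1 (size C)) => hm; last first.
  have [h0|h1'] : size C = 0%N \/ size C = 1%N by lia.
  - by rewrite h0 in hs1 hs2; rewrite (size0nil hs1) (size0nil hs2).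
  - clear h1 h2; move: hC1 hC2 hs1 hs2; rewrite h1'.
    case: C1 => [|a [|? ?]] //; case: C2 => [|b [|? ?]] // hC1 hC2 _ _.
    by have := iso_rst hC1 (hconn b a); case=> _ /(_ erefl) ->.
have x0 : T by case: (C) hm => [//|x ?] _; exact x.
case: h1 => h1; case: h2 => h2.
- apply: (eq_pairs (x0:=x0) hs1 hs2 hm) => i j hij hj.
  have hb := nth_lt x0 hC.1 hij hj.
  by rewrite -(incr_at (b:=mkB hb) h1 hij hj (erefl _)) -(incr_at (b:=mkB hb) h2 hij hj (erefl _)).
- exact: mixed_eq hC h1 h2 hm.
- exact/esym/(mixed_eq hC h2 h1 hm).
- apply: (eq_pairs (x0:=x0) hs1 hs2 hm) => i j hij hj.
  have hij' : (size C - 1 - j < size C - 1 - i)%N by lia.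
  have hj' : (size C - 1 - i < size C)%N by lia.
  have hb := nth_lt x0 hC.1 hij' hj'.
  have e1 := decr_at (b:=mkB hb) h1 hij' hj' (erefl _).
  have e2 := decr_at (b:=mkB hb) h2 hij' hj' (erefl _).
  rewrite e1 in e2.
  have E1 : (size C - 1 - (size C - 1 - i) = i)%N by lia.
  have E2 : (size C - 1 - (size C - 1 - j) = j)%N by lia.
  by rewrite E1 E2 in e2.
Qed.

End P3.


Section P4.
Context {d : Order.disp_t} {T : finPOrderType d}.
Variable th : {perm (@Bpair d T)}.

Definition Jinc (C' : seq T) (b1 b3 : Bpair) (y : T) :=
  [/\ y \in C', ~ is_min y & ~ is_max y] /\ [/\ (val (th b1)).2 = y, (val (th b3)).1 = y,
      is_min (val (th b1)).1 & is_max (val (th b3)).2].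
Definition Jdec (C' : seq T) (b1 b3 : Bpair) (y : T) :=
  [/\ y \in C', ~ is_min y & ~ is_max y] /\ [/\ (val (th b1)).1 = y, (val (th b3)).2 = y,
      is_max (val (th b1)).2 & is_min (val (th b3)).1].

Lemma J_incr (C C' : seq T) x0 i (b1 b3 : Bpair) : maxchain C -> incr_on th C C' ->
  (0 < i)%N -> (i < (size C).-1)%N ->
  val b1 = (nth x0 C 0, nth x0 C i) -> val b3 = (nth x0 C i, nth x0 C (size C).-1) ->
  Jinc C' b1 b3 (nth x0 C' i).
Proof.
move=> hC hI h0 h1 e1 e3.
have [hC' [hs _]] := hI.
have hl : ((size C).-1 < size C)%N by lia.
have f1 := incr_at hI h0 (ltn_trans h1 hl) e1.
have f3 := incr_at hI h1 hl e3.
rewrite -hs in h1 f3.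
have [i1 i2 i3] := interior x0 hC'.1 h0 h1.
rewrite /Jinc /Jdec f1 f3 /=; split => //; split => //.
- by apply: first_min hC' _; move: h1; case: (size C').
- by apply: last_max hC' _; move: h1; case: (size C').
Qed.

Lemma J_decr (C C' : seq T) x0 i (b1 b3 : Bpair) : maxchain C -> decr_on th C C' ->
  (0 < i)%N -> (i < (size C).-1)%N ->
  val b1 = (nth x0 C 0, nth x0 C i) -> val b3 = (nth x0 C i, nth x0 C (size C).-1) ->
  Jdec C' b1 b3 (nth x0 C' (size C - 1 - i)).
Proof.
move=> hC hI h0 h1 e1 e3.
have [hC' [hs _]] := hI.
have hl : ((size C).-1 < size C)%N by lia.
have f1 := decr_at hI h0 (ltn_trans h1 hl) e1.
have f3 := decr_at hI h1 hl e3.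
have [i1 i2 i3] := interior x0 (j := (size C - 1 - i)%N) hC'.1 ltac:(lia) ltac:(rewrite hs; lia).
rewrite /Jinc /Jdec f1 f3 /=; split => //; split => //.
- have -> : (size C - 1 - 0 = (size C').-1)%N by rewrite hs; lia.
  by apply: last_max hC' _; rewrite hs; lia.
- have -> : (size C - 1 - (size C).-1 = 0)%N by lia.
  by apply: first_min hC' _; rewrite hs; lia.
Qed.

Lemma J_maps (C C' : seq T) x0 i (b1 b3 : Bpair) : maxchain C -> maps_chain th C C' ->
  (0 < i)%N -> (i < (size C).-1)%N ->
  val b1 = (nth x0 C 0, nth x0 C i) -> val b3 = (nth x0 C i, nth x0 C (size C).-1) ->
  (incr_on th C C' /\ exists y, Jinc C' b1 b3 y) \/ (decr_on th C C' /\ exists y, Jdec C' b1 b3 y).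
Proof.
move=> hC [h|h] h0 h1 e1 e3; [left|right]; split => //; eexists.
- exact: J_incr h h0 h1 e1 e3.
- exact: J_decr h h0 h1 e1 e3.
Qed.

Lemma id_b1 C' E' b1 b3 b3' y z : Jinc C' b1 b3 y -> Jdec E' b1 b3' z -> False.
Proof. by case=> [[_ _ _] [_ _ hm _]] [[_ hz _] [e _ _ _]]; apply: hz; rewrite -e. Qed.
Lemma id_b3 C' E' b1 b1' b3 y z : Jinc C' b1 b3 y -> Jdec E' b1' b3 z -> False.
Proof. by case=> [[_ _ _] [_ _ _ hm]] [[_ _ hz] [_ e _ _]]; apply: hz; rewrite -e. Qed.
Lemma ii_b1 C' E' b1 b3 b3' y z : Jinc C' b1 b3 y -> Jinc E' b1 b3' z -> y = z.
Proof. by case=> [_ [e _ _ _]] [_ [e' _ _ _]]; rewrite -e -e'. Qed.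
Lemma ii_b3 C' E' b1 b1' b3 y z : Jinc C' b1 b3 y -> Jinc E' b1' b3 z -> y = z.
Proof. by case=> [_ [_ e _ _]] [_ [_ e' _ _]]; rewrite -e -e'. Qed.
Lemma dd_b1 C' E' b1 b3 b3' y z : Jdec C' b1 b3 y -> Jdec E' b1 b3' z -> y = z.
Proof. by case=> [_ [e _ _ _]] [_ [e' _ _ _]]; rewrite -e -e'. Qed.
Lemma dd_b3 C' E' b1 b1' b3 y z : Jdec C' b1 b3 y -> Jdec E' b1' b3 z -> y = z.
Proof. by case=> [_ [_ e _ _]] [_ [_ e' _ _]]; rewrite -e -e'. Qed.

End P4.


Section P5.
Context {d : Order.disp_t} {T : finPOrderType d}.

Lemma setup (C D : seq T) x (P : Prop) : maxchain C -> maxchain D -> x \in C -> x \in D ->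
  ~ is_min x -> ~ is_max x ->
  (forall (E : seq T) i k, maxchain E -> (0 < i)%N -> (i < (size C).-1)%N -> (i < (size E).-1)%N ->
     (0 < k)%N -> (k < (size D).-1)%N ->
     nth x C i = x -> nth x E i = x -> nth x D k = x ->
     nth x E 0 = nth x C 0 -> nth x E (size E).-1 = nth x D (size D).-1 ->
     nth x C 0 < x -> x < nth x C (size C).-1 -> nth x D 0 < x -> x < nth x D (size D).-1 -> P) -> P.
Proof.
move=> hC hD xC xD nmin nmax K.
move: hC K; case/splitPr: xC => c1 c2 hC K.
move: hD K; case/splitPr: xD => d1 d2 hD K.
have hc1 : (0 < size c1)%N.
  rewrite lt0n size_eq0; apply/eqP => e; subst c1; apply: nmin.
  by have := first_min (x0:=x) hC isT.
have hd1 : (0 < size d1)%N.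
  rewrite lt0n size_eq0; apply/eqP => e; subst d1; apply: nmin.
  by have := first_min (x0:=x) hD isT.
have hc2 : (0 < size c2)%N.
  rewrite lt0n size_eq0; apply/eqP => e; subst c2; apply: nmax.
  have := last_max (x0:=x) hC; rewrite nth_last last_cat /=; apply.
  by rewrite size_cat /= addn1.
have hd2 : (0 < size d2)%N.
  rewrite lt0n size_eq0; apply/eqP => e; subst d2; apply: nmax.
  have := last_max (x0:=x) hD; rewrite nth_last last_cat /=; apply.
  by rewrite size_cat /= addn1.
have [a1 b1 _ _] := split_lt hC.1.
have [a2 b2 _ _] := split_lt hD.1.
have l2 : forall s : seq T, (0 < size s)%N -> last x s \in s.
  by case=> // a s _; rewrite /= mem_last.
apply: (K (c1 ++ x :: d2) (size c1) (size d1) (glue hC hD)).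
- exact: hc1.
- by rewrite size_cat [size (_ :: _)]/= addnS succnK -{1}(addn0 (size c1)) ltn_add2l.
- by rewrite size_cat [size (_ :: _)]/= addnS succnK -{1}(addn0 (size c1)) ltn_add2l.
- exact: hd1.
- by rewrite size_cat [size (_ :: _)]/= addnS succnK -{1}(addn0 (size d1)) ltn_add2l.
- by rewrite nth_cat ltnn subnn.
- by rewrite nth_cat ltnn subnn.
- by rewrite nth_cat ltnn subnn.
- by rewrite !nth_cat; case: ifP.
- by rewrite !nth_last !last_cat.
- rewrite nth_cat; case: ifP => h; first by apply: a1; apply: mem_nth.
  by move/negbT/negP: h; case; exact: hc1.
- by rewrite nth_last last_cat /=; apply: b1; apply: l2.
- rewrite nth_cat; case: ifP => h; first by apply: a2; apply: mem_nth.
  by move/negbT/negP: h; case; exact: hd1.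
- by rewrite nth_last last_cat /=; apply: b2; apply: l2.
Qed.

End P5.


Section P6.
Context {d : Order.disp_t} {T : finPOrderType d}.
Variable th : {perm (@Bpair d T)}.
Hypothesis hM : in_M th.

Lemma maps_max (C C' : seq T) : maps_chain th C C' -> maxchain C'.
Proof. by case=> [[h _]|[h _]]. Qed.

Lemma linked_img (C D C' D' : seq T) : linked C D -> maps_chain th C C' -> maps_chain th D D' ->
  linked C' D'.
Proof.
case=> hC [hD [x [xC xD nmin nmax]]] mC mD.
apply: (setup hC hD xC xD nmin nmax) => E i k hE i0 iC iE k0 kD eCi eEi eDk eE0 eEl lC0 lCl lD0 lDl.
pose b1 := mkB lC0. pose b3C := mkB lCl. pose b3 := mkB lDl. pose b1D := mkB lD0.
have [E' mE] := hM hE.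
have JC := J_maps (x0:=x) (b1:=b1) (b3:=b3C) hC mC i0 iC ltac:(by rewrite /= eCi) ltac:(by rewrite /= eCi).
have JE := J_maps (x0:=x) (b1:=b1) (b3:=b3) hE mE i0 iE ltac:(by rewrite /= eE0 eEi) ltac:(by rewrite /= eEi eEl).
have JD := J_maps (x0:=x) (b1:=b1D) (b3:=b3) hD mD k0 kD ltac:(by rewrite /= eDk) ltac:(by rewrite /= eDk).
split; first exact: maps_max mC.
split; first exact: maps_max mD.
case: JC => [[_ [y Jy]]|[_ [y Jy]]]; case: JE => [[_ [z Jz]]|[_ [z Jz]]];
  try (by case: (id_b1 Jy Jz)); try (by case: (id_b1 Jz Jy));
  case: JD => [[_ [w Jw]]|[_ [w Jw]]];
  try (by case: (id_b3 Jz Jw)); try (by case: (id_b3 Jw Jz)).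
- have e1 := ii_b1 Jy Jz; have e2 := ii_b3 Jz Jw; subst z w.
  case: Jy => [[y1 y2 y3] _]; case: Jw => [[w1 _ _] _].
  by exists y; split.
- have e1 := dd_b1 Jy Jz; have e2 := dd_b3 Jz Jw; subst z w.
  case: Jy => [[y1 y2 y3] _]; case: Jw => [[w1 _ _] _].
  by exists y; split.
Qed.

Lemma linked_type (C D : seq T) : linked C D ->
  ((exists C', incr_on th C C') -> exists D', incr_on th D D') /\
  ((exists C', decr_on th C C') -> exists D', decr_on th D D').
Proof.
case=> hC [hD [x [xC xD nmin nmax]]].
apply: (setup hC hD xC xD nmin nmax) => E i k hE i0 iC iE k0 kD eCi eEi eDk eE0 eEl lC0 lCl lD0 lDl.
pose b1 := mkB lC0. pose b3C := mkB lCl. pose b3 := mkB lDl. pose b1D := mkB lD0.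
have [E' mE] := hM hE.
have [D' mD] := hM hD.
have e1 : val b1 = (nth x C 0, nth x C i) by rewrite /= eCi.
have e2 : val b3C = (nth x C i, nth x C (size C).-1) by rewrite /= eCi.
have e3 : val b1 = (nth x E 0, nth x E i) by rewrite /= eE0 eEi.
have e4 : val b3 = (nth x E i, nth x E (size E).-1) by rewrite /= eEi eEl.
have e5 : val b1D = (nth x D 0, nth x D k) by rewrite /= eDk.
have e6 : val b3 = (nth x D k, nth x D (size D).-1) by rewrite /= eDk.
split => -[C0 hI].
- have JC := J_incr hC hI i0 iC e1 e2.
  case: mE => hE'.
  + have JE := J_incr hE hE' i0 iE e3 e4.
    case: mD => hD'; first by exists D'.
    by case: (id_b3 JE (J_decr hD hD' k0 kD e5 e6)).
  + by case: (id_b1 JC (J_decr hE hE' i0 iE e3 e4)).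
- have JC := J_decr hC hI i0 iC e1 e2.
  case: mE => hE'.
  + by case: (id_b1 (J_incr hE hE' i0 iE e3 e4) JC).
  + have JE := J_decr hE hE' i0 iE e3 e4.
    case: mD => hD'; last by exists D'.
    by case: (id_b3 (J_incr hD hD' k0 kD e5 e6) JE).
Qed.

End P6.


Section P7.
Context {d : Order.disp_t} {T : finPOrderType d}.

Lemma inv_maps (th : {perm (@Bpair d T)}) (C C' : seq T) : maxchain C -> maps_chain th C C' ->
  maps_chain (th^-1)%g C' C.
Proof.
by move=> hC [h|h]; [left; apply: inv_incr | right; apply: inv_decr].
Qed.

Lemma linked_sym (C D : seq T) : linked C D -> linked D C.
Proof. by case=> hC [hD [x [a b c e]]]; split => //; split => //; exists x; split. Qed.

Lemma set_chain_eq (s1 s2 : seq T) : is_chain s1 -> is_chain s2 ->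
  [set x in s1] = [set x in s2] -> s1 = s2.
Proof.
move=> h1 h2 e; apply: (irr_sorted_eq lt_trans ltxx h1 h2) => x.
by have := congr1 (fun S : {set T} => x \in S) e; rewrite !inE.
Qed.

Variable th : {perm (@Bpair d T)}.
Hypothesis hconn : @poset_connected d T.

Lemma equiv_img (hM : in_M th) (C D : seq T) : maxchain C -> chain_equiv C D ->
  forall C' D', maps_chain th C C' -> maps_chain th D D' -> chain_equiv C' D'.
Proof.
move=> hC he; have h := @clos_rst_rst1n _ _ _ _ he; clear he.
elim: h hC => {C D}.
- move=> x hx C' D' m1 m2; rewrite (uniq_img hconn hx m1 m2); exact: rst_refl.
- move=> x y z hxy _ IH hx C' D' m1 m2.
  have hy : maxchain y by case: hxy => [[_ [h _]]|[h _]].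
  have [y' my] := hM _ hy.
  apply: (rst_trans _ _ _ y'); last exact: IH.
  case: hxy => h.
  + by apply: rst_step; apply: linked_img m1 my.
  + by apply: rst_sym; apply: rst_step; apply: linked_img my m1.
Qed.

Lemma surj (hM : in_M th) (D' : seq T) : maxchain D' -> exists C, maxchain C /\ maps_chain th C D'.
Proof.
move=> hD'.
pose isch (A : {set T}) := exists C, maxchain C /\ A = [set x in C].
pose P A B := (isch A -> exists C C', [/\ maxchain C, A = [set x in C], maps_chain th C C'
                                       & B = [set x in C']]) /\ (~ isch A -> B = A).
have exB : forall A, exists B, P A B.
  move=> A; case: (classic (isch A)) => h.
  - case: (h) => C [hC eA]; case: (hM _ hC) => C' m; exists [set x in C']; split => // _.
    by exists C, C'.
  - by exists A; split.
have [g gP] : exists g : {set T} -> {set T}, forall A, P A (g A).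
  exists (fun A => proj1_sig (constructive_indefinite_description _ (exB A))).
  move=> A; exact: proj2_sig (constructive_indefinite_description _ (exB A)).
have ginj : injective g.
  move=> A1 A2 e.
  case: (classic (isch A1)) => h1; case: (classic (isch A2)) => h2.
  - have [C1 [C1' [hC1 eA1 m1 eg1]]] := (gP A1).1 h1.
    have [C2 [C2' [hC2 eA2 m2 eg2]]] := (gP A2).1 h2.
    have e' : C1' = C2'.
      apply: set_chain_eq; [exact: (maps_max m1).1 | exact: (maps_max m2).1 | by rewrite -eg1 -eg2].
    subst C2'.
    have := uniq_img hconn (maps_max m1) (inv_maps hC1 m1) (inv_maps hC2 m2).
    by move=> eC; rewrite eA1 eA2 eC.
  - have [C1 [C1' [hC1 eA1 m1 eg1]]] := (gP A1).1 h1.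
    have gA2 := (gP A2).2 h2.
    exfalso; apply: h2; exists C1'; split; first exact: maps_max m1.
    by rewrite -gA2 -e eg1.
  - have [C2 [C2' [hC2 eA2 m2 eg2]]] := (gP A2).1 h2.
    have gA1 := (gP A1).2 h1.
    exfalso; apply: h1; exists C2'; split; first exact: maps_max m2.
    by rewrite -gA1 e eg2.
  - by rewrite -((gP A1).2 h1) -[RHS]((gP A2).2 h2).
pose A := invF ginj [set x in D'].
have gA : g A = [set x in D'] by apply: f_invF.
case: (classic (isch A)) => h.
- have [C [C' [hC eA m eg]]] := (gP A).1 h.
  exists C; split => //.
  have -> : D' = C' by apply: set_chain_eq; [exact: hD'.1 | exact: (maps_max m).1 | by rewrite -gA].
  exact: m.
- have gA' := (gP A).2 h.
  exfalso; apply: h; exists D'; split => //.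
  by rewrite -gA gA'.
Qed.

End P7.

Local Close Scope order_scope.

Theorem lemma3p7 (d : Order.disp_t) (T : finPOrderType d)
  (hconn : @poset_connected d T) (th : {perm (@Bpair d T)}) (hM : in_M th) :
  (* C ~ D implies theta(C) ~ theta(D)  (so theta~ is well defined) *)
  (forall C D C' D' : seq T, maxchain C -> maxchain D ->
     chain_equiv C D -> maps_chain th C C' -> maps_chain th D D' ->
     chain_equiv C' D') /\
  (* theta~ is injective on C(X)/~ *)
  (forall C D C' D' : seq T, maxchain C -> maxchain D ->
     maps_chain th C C' -> maps_chain th D D' -> chain_equiv C' D' ->
     chain_equiv C D) /\
  (* theta~ is surjective on C(X)/~ *)
  (forall D' : seq T, maxchain D' ->
     exists C C' : seq T, [/\ maxchain C, maps_chain th C C' & chain_equiv C' D']) /\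
  (* increasing / decreasing is constant on ~-classes *)
  (forall C D : seq T, maxchain C -> maxchain D -> chain_equiv C D ->
     ((exists C', incr_on th C C') -> exists D', incr_on th D D') /\
     ((exists C', decr_on th C C') -> exists D', decr_on th D D')).
Proof.
have hM' : in_M (th^-1)%g.
  move=> E hE; have [C [hC m]] := surj hconn hM hE.
  by exists C; apply: inv_maps hC m.
split.
  move=> C D C' D' hC hD he m1 m2; exact: (@equiv_img d T th hconn hM C D hC he C' D' m1 m2).
split.
  move=> C D C' D' hC hD m1 m2 he.
  exact: (equiv_img hconn hM' (maps_max m1) he (inv_maps hC m1) (inv_maps hD m2)).
split.
  move=> D' hD'; have [C [hC m]] := surj hconn hM hD'.
  by exists C, D'; split => //; apply: rst_refl.
move=> C D hC hD he.
suff : ((exists C', incr_on th C C') <-> exists D', incr_on th D D') /\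
       ((exists C', decr_on th C C') <-> exists D', decr_on th D D').
  by case=> [[h1 _] [h2 _]].
elim: he => {C D hC hD}.
- move=> x y hxy.
  have [a b] := linked_type hM hxy; have [a' b'] := linked_type hM (linked_sym hxy).
  by split; split.
- by move=> x; split; split.
- by move=> x y _ [[a b] [c e]]; split; split.
- by move=> x y z _ [[a b] [c e]] _ [[a' b'] [c' e']]; split; split; auto.
Qed.
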